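(* Let $A$ be an algebra of Jordan type half over a field $\mathbb{F}$ of characteristic zero. If $a,b\in A$ are primitive axes of Jordan type half with $(a,b)=1$, then every non-zero idempotent of $J=\langle\langle a,b\rangle\rangle$ is a primitive axis of Jordan type half in $A$; that is, $J$ is solid.
   Context: All algebras are commutative, not necessarily associative; $A_\lambda(x)=\{u\in A:xu=\lambda u\}$. A primitive axis of Jordan type half is $x\neq0$ with $x^2=x$, $A=A_1(x)\oplus A_0(x)\oplus A_{1/2}(x)$, $A_1(x)=\mathbb{F}x$, and fusion rules $A_1A_1\subseteq A_1$, $A_1A_0=0$, $A_0A_0\subseteq A_0$, $A_1A_{1/2},A_0A_{1/2}\subseteq A_{1/2}$, $A_{1/2}A_{1/2}\subseteq A_1\oplus A_0$. An algebra of Jordan type half is a commutative algebra generated by such axes; it has a unique Frobenius form $(\cdot,\cdot)$ (bilinear, $(uv,w)=(u,vw)$, $(x,x)=1$ for primitive axes $x$). $J=\langle\langle a,b\rangle\rangle$ is solid if every idempotent $c\in J$ with $c\neq0$ and $c\neq1_J$ (the identity of $J$, if it exists; here $J$ has none) is a primitive axis of Jordan type half in $A$. *)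

(* Defs.v *)
From HB Require Import structures.
From mathcomp Require Import all_boot all_order all_algebra.
Set Implicit Arguments. Unset Strict Implicit. Unset Printing Implicit Defensive.
Import GRing.Theory.
Local Open Scope ring_scope.

Section JordanHalf.
Variables (F : fieldType) (V : lmodType F) (mul : V -> V -> V).

Definition comm_bilinear_mul : Prop :=
  [/\ forall u v, mul u v = mul v u,
      forall (k : F) u v w, mul (k *: u + v) w = k *: mul u w + mul v w
    & forall (k : F) u v w, mul w (k *: u + v) = k *: mul w u + mul w v].

Definition eigsp (x : V) (lam : F) (u : V) : Prop := mul x u = lam *: u.

Definition primitive_axis_half (x : V) : Prop :=
  [/\ x != 0,
      mul x x = x,
      (* A = A_1(x) + A_0(x) + A_{1/2}(x) (the sum is automatically direct) *)
      forall u, exists u1 u0 uh,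
        [/\ u = u1 + u0 + uh, eigsp x 1 u1, eigsp x 0 u0 & eigsp x 2^-1 uh],
      (forall u, eigsp x 1 u -> exists k : F, u = k *: x) &
      [/\ forall u v, eigsp x 1 u -> eigsp x 1 v -> eigsp x 1 (mul u v),
          forall u v, eigsp x 1 u -> eigsp x 0 v -> mul u v = 0,
          forall u v, eigsp x 0 u -> eigsp x 0 v -> eigsp x 0 (mul u v),
          (forall u v, eigsp x 1 u -> eigsp x 2^-1 v -> eigsp x 2^-1 (mul u v)) /\
          (forall u v, eigsp x 0 u -> eigsp x 2^-1 v -> eigsp x 2^-1 (mul u v))
        & forall u v, eigsp x 2^-1 u -> eigsp x 2^-1 v ->
            exists w1 w0, [/\ mul u v = w1 + w0, eigsp x 1 w1 & eigsp x 0 w0]]].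

Inductive gen_subalg (S : V -> Prop) : V -> Prop :=
  | gen_base x : S x -> gen_subalg S x
  | gen_zero : gen_subalg S 0
  | gen_add u v : gen_subalg S u -> gen_subalg S v -> gen_subalg S (u + v)
  | gen_scale (k : F) u : gen_subalg S u -> gen_subalg S (k *: u)
  | gen_mul u v : gen_subalg S u -> gen_subalg S v -> gen_subalg S (mul u v).

Definition jordan_type_half_algebra : Prop :=
  comm_bilinear_mul /\ forall u, gen_subalg primitive_axis_half u.

Definition frobenius_form (form : V -> V -> F) : Prop :=
  [/\ forall (k : F) u v w, form (k *: u + v) w = k * form u w + form v w,
      forall (k : F) u v w, form w (k *: u + v) = k * form w u + form w v,
      forall u v w, form (mul u v) w = form u (mul v w)
    & forall x, primitive_axis_half x -> form x x = 1].

Definition gen2 (a b : V) : V -> Prop := gen_subalg (fun x => x = a \/ x = b).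

End JordanHalf.

(* Main.v *)
Require Import Defs.
From HB Require Import structures.
From mathcomp Require Import all_boot all_order all_algebra.
From mathcomp Require Import ring.
Import GRing.Theory.
Local Open Scope ring_scope.

Lemma mulCx {F : fieldType} {V : lmodType F} {mul : V -> V -> V}
  (hm : comm_bilinear_mul mul) u v : mul u v = mul v u.
Proof. by case: hm. Qed.

Lemma mulDlx {F : fieldType} {V : lmodType F} {mul : V -> V -> V}
  (hm : comm_bilinear_mul mul) u v w : mul (u + v) w = mul u w + mul v w.
Proof. by have [_ h _] := hm; rewrite -{1}[u]scale1r h scale1r. Qed.

Lemma mul0lx {F : fieldType} {V : lmodType F} {mul : V -> V -> V}
  (hm : comm_bilinear_mul mul) w : mul 0 w = 0.
Proof.
have h := mulDlx hm 0 0 w; rewrite addr0 in h.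
by apply: (addrI (mul 0 w)); rewrite addr0 -h.
Qed.

Lemma mulZlx {F : fieldType} {V : lmodType F} {mul : V -> V -> V}
  (hm : comm_bilinear_mul mul) k u w : mul (k *: u) w = k *: mul u w.
Proof. by have [_ h _] := hm; rewrite -[k *: u]addr0 h (mul0lx hm) addr0. Qed.

Lemma mulDrx {F : fieldType} {V : lmodType F} {mul : V -> V -> V}
  (hm : comm_bilinear_mul mul) u v w : mul w (u + v) = mul w u + mul w v.
Proof. by rewrite !(mulCx hm w) (mulDlx hm). Qed.

Lemma mulZrx {F : fieldType} {V : lmodType F} {mul : V -> V -> V}
  (hm : comm_bilinear_mul mul) k u w : mul w (k *: u) = k *: mul w u.
Proof. by rewrite !(mulCx hm w) (mulZlx hm). Qed.

Lemma mul0rx {F : fieldType} {V : lmodType F} {mul : V -> V -> V}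
  (hm : comm_bilinear_mul mul) w : mul w 0 = 0.
Proof. by rewrite (mulCx hm) (mul0lx hm). Qed.

Lemma mulNlx {F : fieldType} {V : lmodType F} {mul : V -> V -> V}
  (hm : comm_bilinear_mul mul) u w : mul (- u) w = - mul u w.
Proof. by rewrite -scaleN1r (mulZlx hm) scaleN1r. Qed.

Lemma mulNrx {F : fieldType} {V : lmodType F} {mul : V -> V -> V}
  (hm : comm_bilinear_mul mul) u w : mul w (- u) = - mul w u.
Proof. by rewrite -scaleN1r (mulZrx hm) scaleN1r. Qed.

Lemma mulBlx {F : fieldType} {V : lmodType F} {mul : V -> V -> V}
  (hm : comm_bilinear_mul mul) u v w : mul (u - v) w = mul u w - mul v w.
Proof. by rewrite (mulDlx hm) (mulNlx hm). Qed.

Lemma mulBrx {F : fieldType} {V : lmodType F} {mul : V -> V -> V}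
  (hm : comm_bilinear_mul mul) u v w : mul w (u - v) = mul w u - mul w v.
Proof. by rewrite (mulDrx hm) (mulNrx hm). Qed.

Definition comb3 {F : fieldType} {V : lmodType F} (w1 w2 w3 : V) (x y z : F) : V :=
  x *: w1 + y *: w2 + z *: w3.

Lemma comb3D {F : fieldType} {V : lmodType F} (w1 w2 w3 : V) x y z x' y' z' :
  comb3 w1 w2 w3 x y z + comb3 w1 w2 w3 x' y' z' = comb3 w1 w2 w3 (x + x') (y + y') (z + z').
Proof. by rewrite /comb3 addrACA [_ + (x' *: _ + _)]addrACA !scalerDl. Qed.

Lemma comb3Z {F : fieldType} {V : lmodType F} (w1 w2 w3 : V) k x y z :
  k *: comb3 w1 w2 w3 x y z = comb3 w1 w2 w3 (k * x) (k * y) (k * z).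
Proof. by rewrite /comb3 !scalerDr !scalerA. Qed.

Lemma comb3N {F : fieldType} {V : lmodType F} (w1 w2 w3 : V) x y z :
  - comb3 w1 w2 w3 x y z = comb3 w1 w2 w3 (- x) (- y) (- z).
Proof. by rewrite -scaleN1r comb3Z !mulN1r. Qed.

Lemma comb3B {F : fieldType} {V : lmodType F} (w1 w2 w3 : V) x y z x' y' z' :
  comb3 w1 w2 w3 x y z - comb3 w1 w2 w3 x' y' z' = comb3 w1 w2 w3 (x - x') (y - y') (z - z').
Proof. by rewrite comb3N comb3D. Qed.

Lemma comb30 {F : fieldType} {V : lmodType F} (w1 w2 w3 : V) :
  comb3 w1 w2 w3 0 0 0 = 0.
Proof. by rewrite /comb3 !scale0r !addr0. Qed.

Lemma comb3_1 {F : fieldType} {V : lmodType F} (w1 w2 w3 : V) :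
  comb3 w1 w2 w3 1 1 1 = w1 + w2 + w3.
Proof. by rewrite /comb3 !scale1r. Qed.

Lemma comb3E {F : fieldType} {V : lmodType F} (w1 w2 w3 : V) x y z x' y' z' :
  x = x' -> y = y' -> z = z' -> comb3 w1 w2 w3 x y z = comb3 w1 w2 w3 x' y' z'.
Proof. by move=> -> -> ->. Qed.
Lemma two_neq0 {F : fieldType} (hF : [pchar F] =i pred0) : (2 : F) != 0.
Proof. by move/pcharf0P: hF => ->. Qed.

Lemma eigD {F : fieldType} {V : lmodType F} {mul : V -> V -> V}
  (hm : comm_bilinear_mul mul) {x l u v} :
  eigsp mul x l u -> eigsp mul x l v -> eigsp mul x l (u + v).
Proof. by rewrite /eigsp (mulDrx hm) scalerDr => -> ->. Qed.

Lemma eigZ {F : fieldType} {V : lmodType F} {mul : V -> V -> V}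
  (hm : comm_bilinear_mul mul) {x l} k {u} :
  eigsp mul x l u -> eigsp mul x l (k *: u).
Proof. by rewrite /eigsp (mulZrx hm) => ->; rewrite !scalerA mulrC. Qed.

Lemma eigN {F : fieldType} {V : lmodType F} {mul : V -> V -> V}
  (hm : comm_bilinear_mul mul) {x l u} :
  eigsp mul x l u -> eigsp mul x l (- u).
Proof. by move=> h; rewrite -scaleN1r; apply: eigZ. Qed.

Lemma eigB {F : fieldType} {V : lmodType F} {mul : V -> V -> V}
  (hm : comm_bilinear_mul mul) {x l u v} :
  eigsp mul x l u -> eigsp mul x l v -> eigsp mul x l (u - v).
Proof. by move=> h1 h2; apply: eigD => //; apply: eigN. Qed.

Lemma eig0 {F : fieldType} {V : lmodType F} {mul : V -> V -> V}
  (hm : comm_bilinear_mul mul) {x} l : eigsp mul x l 0.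
Proof. by rewrite /eigsp (mul0rx hm) scaler0. Qed.

Lemma Lcomb {F : fieldType} {V : lmodType F} {mul : V -> V -> V}
  (hm : comm_bilinear_mul mul) {x u1 u0 uh} :
  eigsp mul x 1 u1 -> eigsp mul x 0 u0 -> eigsp mul x 2^-1 uh ->
  forall a b c, mul x (comb3 u1 u0 uh a b c) = comb3 u1 u0 uh a 0 (c * 2^-1).
Proof.
rewrite /eigsp => h1 h0 hh a b c.
rewrite /comb3 !(mulDrx hm) !(mulZrx hm) h1 h0 hh !scale1r !scale0r !scaler0.
by rewrite scalerA.
Qed.

Lemma dec_uniq0 {F : fieldType} {V : lmodType F} {mul : V -> V -> V}
  (hF : [pchar F] =i pred0)
  (hm : comm_bilinear_mul mul) {x u1 u0 uh} :
  eigsp mul x 1 u1 -> eigsp mul x 0 u0 -> eigsp mul x 2^-1 uh ->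
  u1 + u0 + uh = 0 -> [/\ u1 = 0, u0 = 0 & uh = 0].
Proof.
move=> h1 h0 hh e.
have LC := Lcomb hm h1 h0 hh.
have e0 : comb3 u1 u0 uh 1 1 1 = 0 by rewrite comb3_1.
have e1 := congr1 (mul x) e0; rewrite LC (mul0rx hm) in e1.
have e2 := congr1 (mul x) e1; rewrite LC (mul0rx hm) in e2.
have h2 := two_neq0 hF.
have e3 : comb3 u1 u0 uh 0 0 (2^-1 * 2^-1) = 0.
  have -> : (0:V) = comb3 u1 u0 uh 1 0 (1 * 2^-1) - comb3 u1 u0 uh 1 0 (1 * 2^-1 * 2^-1).
    by rewrite e1 e2 subrr.
  rewrite comb3B; apply: comb3E; rewrite ?subrr //.
  field; done.
have Euh : uh = 0.
  move: e3; rewrite /comb3 !scale0r !add0r => /eqP; rewrite scaler_eq0.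
  by rewrite mulf_eq0 invr_eq0 orbb (negbTE h2) => /eqP.
have Eu1 : u1 = 0.
  by move: e1; rewrite /comb3 Euh !scaler0 scale0r scale1r !addr0.
by split=> //; move: e; rewrite Eu1 Euh add0r addr0.
Qed.

Lemma dec_uniq {F : fieldType} {V : lmodType F} {mul : V -> V -> V}
  (hF : [pchar F] =i pred0)
  (hm : comm_bilinear_mul mul) {x u1 u0 uh v1 v0 vh} :
  eigsp mul x 1 u1 -> eigsp mul x 0 u0 -> eigsp mul x 2^-1 uh ->
  eigsp mul x 1 v1 -> eigsp mul x 0 v0 -> eigsp mul x 2^-1 vh ->
  u1 + u0 + uh = v1 + v0 + vh -> [/\ u1 = v1, u0 = v0 & uh = vh].
Proof.
move=> h1 h0 hh g1 g0 gh e.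
have [] := dec_uniq0 hF hm (eigB hm h1 g1) (eigB hm h0 g0) (eigB hm hh gh).
  by rewrite [X in X + _]addrACA -opprD addrACA -opprD e subrr.
by move=> /eqP; rewrite subr_eq0 => /eqP -> /eqP; rewrite subr_eq0 => /eqP ->
  /eqP; rewrite subr_eq0 => /eqP ->.
Qed.
Definition p1 {F : fieldType} {V : lmodType F} (mul : V -> V -> V) x u :=
  2 *: mul x (mul x u) - mul x u.
Definition p0 {F : fieldType} {V : lmodType F} (mul : V -> V -> V) x u :=
  2 *: mul x (mul x u) - 3 *: mul x u + u.
Definition ph {F : fieldType} {V : lmodType F} (mul : V -> V -> V) x u :=
  4 *: (mul x u - mul x (mul x u)).
Definition I1 {F : fieldType} {V : lmodType F} (mul : V -> V -> V) x u :=
  2 *: mul x (mul x (mul x u)) - 3 *: mul x (mul x u) + mul x u.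
Definition I2 {F : fieldType} {V : lmodType F} (mul : V -> V -> V) (form : V -> V -> F) x u :=
  p1 mul x u - form x u *: x.
Definition I3 {F : fieldType} {V : lmodType F} (mul : V -> V -> V) x u v :=
  mul x (mul (p0 mul x u) (p0 mul x v)).
Definition I4 {F : fieldType} {V : lmodType F} (mul : V -> V -> V) x u v :=
  2 *: mul x (mul (p0 mul x u) (ph mul x v)) - mul (p0 mul x u) (ph mul x v).
Definition I5 {F : fieldType} {V : lmodType F} (mul : V -> V -> V) x u v :=
  ph mul x (mul (ph mul x u) (ph mul x v)).

Lemma projs_comb {F : fieldType} {V : lmodType F} {mul : V -> V -> V}
  (hF : [pchar F] =i pred0)
  (hm : comm_bilinear_mul mul) {x u1 u0 uh} :
  eigsp mul x 1 u1 -> eigsp mul x 0 u0 -> eigsp mul x 2^-1 uh ->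
  forall a b c,
  [/\ p1 mul x (comb3 u1 u0 uh a b c) = comb3 u1 u0 uh a 0 0,
      p0 mul x (comb3 u1 u0 uh a b c) = comb3 u1 u0 uh 0 b 0,
      ph mul x (comb3 u1 u0 uh a b c) = comb3 u1 u0 uh 0 0 c &
      I1 mul x (comb3 u1 u0 uh a b c) = 0].
Proof.
move=> h1 h0 hh a b c.
have LC := Lcomb hm h1 h0 hh.
have h2 := two_neq0 hF.
rewrite /p1 /p0 /ph /I1 !LC !comb3Z !comb3B ?comb3D !comb3Z -(comb30 u1 u0 uh).
split; apply: comb3E; field; done.
Qed.

Lemma ax_parts {F : fieldType} {V : lmodType F} {mul : V -> V -> V} {x : V} :
  primitive_axis_half mul x ->
  [/\ x != 0, mul x x = x,
      (forall u, exists u1 u0 uh,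
        [/\ u = u1 + u0 + uh, eigsp mul x 1 u1, eigsp mul x 0 u0 & eigsp mul x 2^-1 uh]),
      (forall u, eigsp mul x 1 u -> exists k : F, u = k *: x) &
      [/\ forall u v, eigsp mul x 1 u -> eigsp mul x 1 v -> eigsp mul x 1 (mul u v),
          forall u v, eigsp mul x 1 u -> eigsp mul x 0 v -> mul u v = 0,
          forall u v, eigsp mul x 0 u -> eigsp mul x 0 v -> eigsp mul x 0 (mul u v),
          (forall u v, eigsp mul x 1 u -> eigsp mul x 2^-1 v -> eigsp mul x 2^-1 (mul u v)) /\
          (forall u v, eigsp mul x 0 u -> eigsp mul x 2^-1 v -> eigsp mul x 2^-1 (mul u v))
        & forall u v, eigsp mul x 2^-1 u -> eigsp mul x 2^-1 v ->
            exists w1 w0, [/\ mul u v = w1 + w0, eigsp mul x 1 w1 & eigsp mul x 0 w0]]].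
Proof. by []. Qed.

Lemma form0r {F : fieldType} {V : lmodType F} {mul : V -> V -> V} {form : V -> V -> F}
  (hf : frobenius_form mul form) w : form w 0 = 0.
Proof.
have [_ h _ _] := hf.
have := h 1 0 0 w; rewrite scale1r addr0 mul1r => e.
by apply: (addrI (form w 0)); rewrite -e addr0.
Qed.

Lemma formDr {F : fieldType} {V : lmodType F} {mul : V -> V -> V} {form : V -> V -> F}
  (hf : frobenius_form mul form) w u v : form w (u + v) = form w u + form w v.
Proof. by have [_ h _ _] := hf; rewrite -[u]scale1r h mul1r scale1r. Qed.

Lemma formZr {F : fieldType} {V : lmodType F} {mul : V -> V -> V} {form : V -> V -> F}
  (hf : frobenius_form mul form) w k u : form w (k *: u) = k * form w u.
Proof. by have [_ h _ _] := hf; rewrite -[k *: u]addr0 h (form0r hf) addr0. Qed.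

Lemma form0l {F : fieldType} {V : lmodType F} {mul : V -> V -> V} {form : V -> V -> F}
  (hf : frobenius_form mul form) w : form 0 w = 0.
Proof.
have [h _ _ _] := hf.
have := h 1 0 0 w; rewrite scale1r addr0 mul1r => e.
by apply: (addrI (form 0 w)); rewrite -e addr0.
Qed.

Lemma formDl {F : fieldType} {V : lmodType F} {mul : V -> V -> V} {form : V -> V -> F}
  (hf : frobenius_form mul form) w u v : form (u + v) w = form u w + form v w.
Proof. by have [h _ _ _] := hf; rewrite -[u]scale1r h mul1r scale1r. Qed.

Lemma formZl {F : fieldType} {V : lmodType F} {mul : V -> V -> V} {form : V -> V -> F}
  (hf : frobenius_form mul form) w k u : form (k *: u) w = k * form u w.
Proof. by have [h _ _ _] := hf; rewrite -[k *: u]addr0 h (form0l hf) addr0. Qed.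

Lemma form_eig0 {F : fieldType} {V : lmodType F} {mul : V -> V -> V} {form : V -> V -> F}
  (hF : [pchar F] =i pred0) (hf : frobenius_form mul form) {x w} l :
  mul x x = x -> l != 1 -> eigsp mul x l w -> form x w = 0.
Proof.
move=> xx l1 e.
have [_ _ h _] := hf.
have := h x x w; rewrite xx e (formZr hf) => /eqP.
rewrite -subr_eq0 -{1}[form x w]mul1r -mulrBl mulf_eq0 subr_eq0 eq_sym (negbTE l1) /=.
by move/eqP.
Qed.

Lemma half_neq1 {F : fieldType} (hF : [pchar F] =i pred0) : (2^-1 : F) != 1.
Proof.
have h2 := two_neq0 hF.
apply/eqP => e; have : (2 : F) * 2^-1 = 2 by rewrite e mulr1.
rewrite mulfV // => /eqP; rewrite -subr_eq0 => /eqP.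
have -> : (1 : F) - 2 = - 1 by rewrite -[2]/(1 + 1)%:R natrD opprD addrA subrr add0r.
by move/eqP; rewrite oppr_eq0 oner_eq0.
Qed.

Lemma lemmaA {F : fieldType} {V : lmodType F} {mul : V -> V -> V} {form : V -> V -> F}
  (hF : [pchar F] =i pred0) (hm : comm_bilinear_mul mul) (hf : frobenius_form mul form)
  {x} : primitive_axis_half mul x ->
  [/\ forall u, I1 mul x u = 0, forall u, I2 mul form x u = 0,
      forall u v, I3 mul x u v = 0, forall u v, I4 mul x u v = 0
    & forall u v, I5 mul x u v = 0].
Proof.
move=> ax; have [xn0 xx dec A1 [f11 f10 f00 [f1h f0h] fhh]] := ax_parts ax.
have h2 := two_neq0 hF.
have hdec : forall u, exists u1 u0 uh, [/\ u = comb3 u1 u0 uh 1 1 1, eigsp mul x 1 u1,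
   eigsp mul x 0 u0 & eigsp mul x 2^-1 uh].
  by move=> u; have [u1 [u0 [uh [-> ? ? ?]]]] := dec u; exists u1, u0, uh; rewrite comb3_1.
split.
- by move=> u; have [u1 [u0 [uh [-> g1 g0 gh]]]] := hdec u; have [] := projs_comb hF hm g1 g0 gh 1 1 1.
- move=> u; have [u1 [u0 [uh [-> g1 g0 gh]]]] := hdec u.
  rewrite /I2; have [-> _ _ _] := projs_comb hF hm g1 g0 gh 1 1 1.
  have [k ->] := A1 _ g1.
  rewrite comb3_1 !(formDr hf) (formZr hf) (form_eig0 hF hf 0 xx _ g0) ?oner_neq0 1?eq_sym ?oner_neq0 //.
  rewrite (form_eig0 hF hf _ xx (half_neq1 hF) gh).
  have [_ _ _ ->] := hf => //.
  by rewrite /comb3 !scale0r !addr0 mulr1 scale1r subrr.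
- move=> u v; have [u1 [u0 [uh [-> g1 g0 gh]]]] := hdec u.
  have [v1 [v0 [vh [-> k1 k0 kh]]]] := hdec v.
  rewrite /I3; have [_ -> _ _] := projs_comb hF hm g1 g0 gh 1 1 1.
  have [_ -> _ _] := projs_comb hF hm k1 k0 kh 1 1 1.
  have := f00 (comb3 u1 u0 uh 0 1 0) (comb3 v1 v0 vh 0 1 0).
  rewrite /comb3 !scale0r !scale1r !add0r !addr0 => /(_ g0 k0).
  by rewrite /eigsp scale0r.
- move=> u v; have [u1 [u0 [uh [-> g1 g0 gh]]]] := hdec u.
  have [v1 [v0 [vh [-> k1 k0 kh]]]] := hdec v.
  rewrite /I4; have [_ -> _ _] := projs_comb hF hm g1 g0 gh 1 1 1.
  have [_ _ -> _] := projs_comb hF hm k1 k0 kh 1 1 1.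
  have := f0h (comb3 u1 u0 uh 0 1 0) (comb3 v1 v0 vh 0 0 1).
  rewrite /comb3 !scale0r !scale1r !add0r !addr0 /eigsp => -> //.
  by rewrite scalerA mulfV // scale1r subrr.
- move=> u v; have [u1 [u0 [uh [-> g1 g0 gh]]]] := hdec u.
  have [v1 [v0 [vh [-> k1 k0 kh]]]] := hdec v.
  rewrite /I5; have [_ _ -> _] := projs_comb hF hm g1 g0 gh 1 1 1.
  have [_ _ -> _] := projs_comb hF hm k1 k0 kh 1 1 1.
  have := fhh (comb3 u1 u0 uh 0 0 1) (comb3 v1 v0 vh 0 0 1).
  rewrite /comb3 !scale0r !scale1r !add0r => /(_ gh kh) [w1 [w0 [-> e1 e0]]].
  have -> : w1 + w0 = comb3 w1 w0 0 1 1 0 by rewrite /comb3 !scale1r scale0r addr0.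
  have [_ _ -> _] := projs_comb hF hm e1 e0 (eig0 hm _) 1 1 0.
  by rewrite comb30.
Qed.
Lemma Bproj {F : fieldType} {V : lmodType F} {mul : V -> V -> V}
  (hF : [pchar F] =i pred0) (hm : comm_bilinear_mul mul) {x u} :
  I1 mul x u = 0 ->
  [/\ u = p1 mul x u + p0 mul x u + ph mul x u, eigsp mul x 1 (p1 mul x u),
      eigsp mul x 0 (p0 mul x u) & eigsp mul x 2^-1 (ph mul x u)].
Proof.
move=> e.
have h2 := two_neq0 hF.
set X1 := mul x u; set X2 := mul x X1.
have E3 : mul x X2 = comb3 u X1 X2 0 (- 2^-1) (2^-1 * 3).
  move/eqP: e; rewrite /I1 -/X1 -/X2 -addrA addr_eq0 opprD opprK => /eqP e.
  have -> : mul x X2 = 2^-1 *: (2 *: mul x X2) by rewrite scalerA mulVf // scale1r.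
  rewrite e.
  have -> : 3 *: X2 - X1 = comb3 u X1 X2 0 (-1) 3.
    by rewrite /comb3 scale0r add0r scaleN1r addrC.
  by rewrite comb3Z mulr0 mulrN1.
have LC : forall a b c, mul x (comb3 u X1 X2 a b c) =
    comb3 u X1 X2 0 (a - c * 2^-1) (b + c * (2^-1 * 3)).
  move=> a b c; rewrite /comb3 !(mulDrx hm) !(mulZrx hm) -/X1 -/X2 E3.
  have -> : a *: X1 + b *: X2 = comb3 u X1 X2 0 a b by rewrite /comb3 scale0r add0r.
  by rewrite -/(comb3 u X1 X2 _ _ _) comb3Z comb3D; apply: comb3E; field.
have Eu : u = comb3 u X1 X2 1 0 0 by rewrite /comb3 scale1r !scale0r !addr0.
have P1 : p1 mul x u = comb3 u X1 X2 0 (-1) 2.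
  by rewrite /p1 -/X1 -/X2 /comb3 scale0r add0r scaleN1r addrC.
have P0 : p0 mul x u = comb3 u X1 X2 1 (-3) 2.
  rewrite /p0 -/X1 -/X2 /comb3 scale1r scaleNr.
  by rewrite [X in X = _]addrC [X in X = _]addrA [X in X = _]addrAC.
have PH : ph mul x u = comb3 u X1 X2 0 4 (-4).
  by rewrite /ph -/X1 -/X2 /comb3 scale0r add0r scaleNr scalerBr.
rewrite /eigsp P1 P0 PH !LC !comb3Z; split.
- by rewrite !comb3D {1}Eu; apply: comb3E; field.
- by apply: comb3E; field.
- by apply: comb3E; field.
- by apply: comb3E; field.
Qed.

Lemma proj_eig {F : fieldType} {V : lmodType F} {mul : V -> V -> V}
  (hF : [pchar F] =i pred0) (hm : comm_bilinear_mul mul) {x u} :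
  [/\ eigsp mul x 1 u -> p1 mul x u = u,
      eigsp mul x 0 u -> p0 mul x u = u &
      eigsp mul x 2^-1 u -> ph mul x u = u].
Proof.
have Z0 := eig0 hm (x := x).
split=> e.
- have Eu : u = comb3 u 0 0 1 0 0 by rewrite /comb3 scale1r !scale0r !addr0.
  rewrite {1}Eu; have [-> _ _ _] := projs_comb hF hm e (Z0 _) (Z0 _) 1 0 0; by rewrite -Eu.
- have Eu : u = comb3 0 u 0 0 1 0 by rewrite /comb3 scale1r !scale0r add0r addr0.
  rewrite {1}Eu; have [_ -> _ _] := projs_comb hF hm (Z0 _) e (Z0 _) 0 1 0; by rewrite -Eu.
- have Eu : u = comb3 0 0 u 0 0 1 by rewrite /comb3 scale1r !scale0r !add0r.
  rewrite {1}Eu; have [_ _ -> _] := projs_comb hF hm (Z0 _) (Z0 _) e 0 0 1; by rewrite -Eu.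
Qed.

Lemma lemmaB {F : fieldType} {V : lmodType F} {mul : V -> V -> V} {form : V -> V -> F}
  (hF : [pchar F] =i pred0) (hm : comm_bilinear_mul mul) {x} :
  x != 0 -> mul x x = x ->
  (forall u, I1 mul x u = 0) -> (forall u, I2 mul form x u = 0) ->
  (forall u v, I3 mul x u v = 0) -> (forall u v, I4 mul x u v = 0) ->
  (forall u v, I5 mul x u v = 0) -> primitive_axis_half mul x.
Proof.
move=> xn0 xx i1 i2 i3 i4 i5.
have h2 := two_neq0 hF.
have A1 : forall u, eigsp mul x 1 u -> exists k : F, u = k *: x.
  move=> u e; exists (form x u); have [pe _ _] := proj_eig hF hm (x := x) (u := u).
  by move/eqP: (i2 u); rewrite /I2 subr_eq0 pe // => /eqP.
have ex1 : eigsp mul x 1 x by rewrite /eigsp xx scale1r.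
split => //.
- move=> u; have [? ? ? ?] := Bproj hF hm (i1 u).
  by exists (p1 mul x u), (p0 mul x u), (ph mul x u).
split.
- move=> u v /A1 [k ->] /A1 [k' ->].
  by rewrite (mulZlx hm) (mulZrx hm) xx; do 2 apply: (eigZ hm).
- move=> u v /A1 [k ->] e.
  by rewrite (mulZlx hm) e scale0r scaler0.
- move=> u v eu ev.
  have [_ pu _] := proj_eig hF hm (x := x) (u := u).
  have [_ pv _] := proj_eig hF hm (x := x) (u := v).
  by have := i3 u v; rewrite /I3 pu // pv // /eigsp scale0r.
- split.
  + move=> u v /A1 [k ->] e.
    by rewrite (mulZlx hm) e; do 2 apply: (eigZ hm).
  + move=> u v eu ev.
    have [_ pu _] := proj_eig hF hm (x := x) (u := u).
    have [_ _ pv] := proj_eig hF hm (x := x) (u := v).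
    have := i4 u v; rewrite /I4 pu // pv // => /eqP; rewrite subr_eq0 => /eqP e.
    by rewrite /eigsp -{2}e scalerA mulVf // scale1r.
- move=> u v eu ev.
  have [_ _ pu] := proj_eig hF hm (x := x) (u := u).
  have [_ _ pv] := proj_eig hF hm (x := x) (u := v).
  have := i5 u v; rewrite /I5 pu // pv // => e.
  have [E g1 g0 _] := Bproj hF hm (i1 (mul u v)).
  exists (p1 mul x (mul u v)), (p0 mul x (mul u v)); split => //.
  by rewrite {1}E e addr0.
Qed.
Definition tau {F : fieldType} {V : lmodType F} (mul : V -> V -> V) x u :=
  u + 8 *: (mul x (mul x u) - mul x u).

Lemma tauD {F : fieldType} {V : lmodType F} {mul : V -> V -> V}
  (hm : comm_bilinear_mul mul) x u v : tau mul x (u + v) = tau mul x u + tau mul x v.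
Proof.
rewrite /tau !(mulDrx hm) opprD [X in 8 *: X]addrACA scalerDr.
by rewrite [RHS]addrACA.
Qed.

Lemma tauZ {F : fieldType} {V : lmodType F} {mul : V -> V -> V}
  (hm : comm_bilinear_mul mul) x k u : tau mul x (k *: u) = k *: tau mul x u.
Proof.
rewrite /tau !(mulZrx hm) -scalerBr scalerA mulrC -scalerA -scalerDr //.
Qed.

Lemma tau_comb {F : fieldType} {V : lmodType F} {mul : V -> V -> V}
  (hF : [pchar F] =i pred0)
  (hm : comm_bilinear_mul mul) {x u1 u0 uh} :
  eigsp mul x 1 u1 -> eigsp mul x 0 u0 -> eigsp mul x 2^-1 uh ->
  forall a b c, tau mul x (comb3 u1 u0 uh a b c) = comb3 u1 u0 uh a b (- c).
Proof.
move=> h1 h0 hh a b c.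
have LC := Lcomb hm h1 h0 hh.
have h2 := two_neq0 hF.
rewrite /tau !LC comb3B comb3Z comb3D; apply: comb3E; field; done.
Qed.

Lemma tau_eig {F : fieldType} {V : lmodType F} {mul : V -> V -> V}
  (hF : [pchar F] =i pred0) (hm : comm_bilinear_mul mul) {x u} :
  [/\ eigsp mul x 1 u -> tau mul x u = u,
      eigsp mul x 0 u -> tau mul x u = u &
      eigsp mul x 2^-1 u -> tau mul x u = - u].
Proof.
have Z0 := eig0 hm (x := x).
split=> e.
- have Eu : u = comb3 u 0 0 1 0 0 by rewrite /comb3 scale1r !scale0r !addr0.
  rewrite {1}Eu tau_comb // ?Z0 //; by rewrite /comb3 !scaler0 !addr0 scale1r.
- have Eu : u = comb3 0 u 0 0 1 0 by rewrite /comb3 scale1r !scale0r add0r addr0.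
  rewrite {1}Eu tau_comb // ?Z0 //; by rewrite /comb3 !scaler0 add0r addr0 scale1r.
- have Eu : u = comb3 0 0 u 0 0 1 by rewrite /comb3 scale1r !scale0r !add0r.
  rewrite {1}Eu tau_comb // ?Z0 //; by rewrite /comb3 !scaler0 !add0r scaleN1r.
Qed.

Lemma tau_auto {F : fieldType} {V : lmodType F} {mul : V -> V -> V}
  (hF : [pchar F] =i pred0) (hm : comm_bilinear_mul mul) {x} :
  primitive_axis_half mul x ->
  (forall u, tau mul x (tau mul x u) = u) /\
  (forall u v, tau mul x (mul u v) = mul (tau mul x u) (tau mul x v)).
Proof.
move=> ax; have [xn0 xx dec A1 [f11 f10 f00 [f1h f0h] fhh]] := ax_parts ax.
split.
  move=> u; have [u1 [u0 [uh [-> g1 g0 gh]]]] := dec u.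
  by rewrite -comb3_1 !(tau_comb hF hm g1 g0 gh) opprK.
pose good p q := tau mul x (mul p q) = mul (tau mul x p) (tau mul x q).
have gl : forall p1 p2 q, good p1 q -> good p2 q -> good (p1 + p2) q.
  by move=> p1 p2 q; rewrite /good (mulDlx hm) tauD // (tauD hm) (mulDlx hm) => -> ->.
have gr : forall p q1 q2, good p q1 -> good p q2 -> good p (q1 + q2).
  by move=> p q1 q2; rewrite /good (mulDrx hm) tauD // (tauD hm) (mulDrx hm) => -> ->.
have T0 : tau mul x 0 = 0 by have [-> //] := tau_eig hF hm (x := x) (u := 0); exact: eig0.
have E1 : forall w, eigsp mul x 1 w -> tau mul x w = w.
  by move=> w; have [] := tau_eig hF hm (x := x) (u := w).
have E0 : forall w, eigsp mul x 0 w -> tau mul x w = w.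
  by move=> w; have [] := tau_eig hF hm (x := x) (u := w).
have Eh : forall w, eigsp mul x 2^-1 w -> tau mul x w = - w.
  by move=> w; have [] := tau_eig hF hm (x := x) (u := w).
move=> u v.
have [u1 [u0 [uh [-> g1 g0 gh]]]] := dec u.
have [v1 [v0 [vh [-> k1 k0 kh]]]] := dec v.
have b11 : forall p q, eigsp mul x 1 p -> eigsp mul x 1 q -> good p q.
  by move=> p q ep eq; rewrite /good (E1 _ ep) (E1 _ eq) E1 //; apply: f11.
have b10 : forall p q, eigsp mul x 1 p -> eigsp mul x 0 q -> good p q.
  by move=> p q ep eq; rewrite /good (E1 _ ep) (E0 _ eq) f10.
have b01 : forall p q, eigsp mul x 0 p -> eigsp mul x 1 q -> good p q.
  by move=> p q ep eq; rewrite /good (E0 _ ep) (E1 _ eq) (mulCx hm) f10.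
have b00 : forall p q, eigsp mul x 0 p -> eigsp mul x 0 q -> good p q.
  by move=> p q ep eq; rewrite /good (E0 _ ep) (E0 _ eq) E0 //; apply: f00.
have b1h : forall p q, eigsp mul x 1 p -> eigsp mul x 2^-1 q -> good p q.
  by move=> p q ep eq; rewrite /good (E1 _ ep) (Eh _ eq) Eh ?(mulNrx hm) //; apply: f1h.
have bh1 : forall p q, eigsp mul x 2^-1 p -> eigsp mul x 1 q -> good p q.
  move=> p q ep eq; rewrite /good (Eh _ ep) (E1 _ eq) (mulNlx hm) (mulCx hm) Eh //.
  by apply: f1h.
have b0h : forall p q, eigsp mul x 0 p -> eigsp mul x 2^-1 q -> good p q.
  by move=> p q ep eq; rewrite /good (E0 _ ep) (Eh _ eq) Eh ?(mulNrx hm) //; apply: f0h.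
have bh0 : forall p q, eigsp mul x 2^-1 p -> eigsp mul x 0 q -> good p q.
  move=> p q ep eq; rewrite /good (Eh _ ep) (E0 _ eq) (mulNlx hm) (mulCx hm) Eh //.
  by apply: f0h.
have bhh : forall p q, eigsp mul x 2^-1 p -> eigsp mul x 2^-1 q -> good p q.
  move=> p q ep eq; rewrite /good (Eh _ ep) (Eh _ eq) (mulNlx hm) (mulNrx hm) opprK.
  have [w1 [w0 [-> e1 e0]]] := fhh _ _ ep eq.
  by rewrite tauD // E1 // E0.
change (good (u1 + u0 + uh) (v1 + v0 + vh)).
apply: (gl); first apply: (gl).
all: apply: (gr); first apply: (gr).
all: auto.
Qed.

Lemma lemmaC {F : fieldType} {V : lmodType F} {mul : V -> V -> V}
  (hm : comm_bilinear_mul mul) (sg : V -> V) :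
  (forall u v, sg (u + v) = sg u + sg v) ->
  (forall k u, sg (k *: u) = k *: sg u) ->
  (forall u v, sg (mul u v) = mul (sg u) (sg v)) ->
  (forall u, sg (sg u) = u) ->
  forall y, primitive_axis_half mul y -> primitive_axis_half mul (sg y).
Proof.
move=> sD sZ sM sK y ax.
have [yn0 yy dec A1 [f11 f10 f00 [f1h f0h] fhh]] := ax_parts ax.
have s0 : sg 0 = 0 by have := sZ 0 0; rewrite !scale0r.
have tr : forall l u, eigsp mul y l u -> eigsp mul (sg y) l (sg u).
  by move=> l u; rewrite /eigsp -sM => ->; rewrite sZ.
have bk : forall l w, eigsp mul (sg y) l w -> eigsp mul y l (sg w).
  by move=> l w e; rewrite /eigsp -[y]sK -sM e sZ.
have back : forall l w, eigsp mul y l (sg w) -> eigsp mul (sg y) l w.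
  by move=> l w /tr; rewrite sK.
split.
- by apply: contraNneq yn0 => e; rewrite -[y]sK e s0.
- by rewrite -sM yy.
- move=> w; have [w1 [w0 [wh [e g1 g0 gh]]]] := dec (sg w).
  exists (sg w1), (sg w0), (sg wh); split; try by apply: tr.
  by rewrite -!sD -e sK.
- move=> w /bk /A1 [k e]; exists k; by rewrite -[w]sK e sZ.
split.
- by move=> u v /bk eu /bk ev; apply: back; rewrite sM; apply: f11.
- by move=> u v /bk eu /bk ev; rewrite -[mul u v]sK sM f10 // s0.
- by move=> u v /bk eu /bk ev; apply: back; rewrite sM; apply: f00.
- split.
  + by move=> u v /bk eu /bk ev; apply: back; rewrite sM; apply: f1h.
  + by move=> u v /bk eu /bk ev; apply: back; rewrite sM; apply: f0h.
- move=> u v /bk eu /bk ev; have [w1 [w0 [e e1 e0]]] := fhh _ _ eu ev.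
  exists (sg w1), (sg w0); split; try by apply: tr.
  by rewrite -sD -e -sM !sK.
Qed.
Lemma projD {F : fieldType} {V : lmodType F} {mul : V -> V -> V}
  (hm : comm_bilinear_mul mul) x u v :
  [/\ p1 mul x (u + v) = p1 mul x u + p1 mul x v,
      p0 mul x (u + v) = p0 mul x u + p0 mul x v &
      ph mul x (u + v) = ph mul x u + ph mul x v].
Proof.
rewrite /p1 /p0 /ph !(mulDrx hm) !scalerDr !opprD; split.
- by rewrite addrACA.
- by rewrite [X in X + _ = _]addrACA [LHS]addrACA.
- by rewrite addrACA scalerDr.
Qed.

Lemma proj_vals {F : fieldType} {V : lmodType F} {mul : V -> V -> V}
  (hF : [pchar F] =i pred0) (hm : comm_bilinear_mul mul) {x w} :
  [/\ eigsp mul x 1 w -> [/\ p1 mul x w = w, p0 mul x w = 0 & ph mul x w = 0],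
      eigsp mul x 0 w -> [/\ p1 mul x w = 0, p0 mul x w = w & ph mul x w = 0] &
      eigsp mul x 2^-1 w -> [/\ p1 mul x w = 0, p0 mul x w = 0 & ph mul x w = w]].
Proof.
have Z0 := eig0 hm (x := x).
split=> e.
- have Eu : w = comb3 w 0 0 1 0 0 by rewrite /comb3 scale1r !scale0r !addr0.
  have [P1 P0 PH _] := projs_comb hF hm e (Z0 _) (Z0 _) 1 0 0.
  by rewrite Eu P1 P0 PH /comb3 ?scale0r ?scaler0 ?addr0 ?add0r ?scale1r.
- have Eu : w = comb3 0 w 0 0 1 0 by rewrite /comb3 scale1r !scale0r add0r addr0.
  have [P1 P0 PH _] := projs_comb hF hm (Z0 _) e (Z0 _) 0 1 0.
  by rewrite Eu P1 P0 PH /comb3 ?scale0r ?scaler0 ?addr0 ?add0r ?scale1r.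
- have Eu : w = comb3 0 0 w 0 0 1 by rewrite /comb3 scale1r !scale0r !add0r.
  have [P1 P0 PH _] := projs_comb hF hm (Z0 _) (Z0 _) e 0 0 1.
  by rewrite Eu P1 P0 PH /comb3 ?scale0r ?scaler0 ?addr0 ?add0r ?scale1r.
Qed.
Lemma p1D {F : fieldType} {V : lmodType F} {mul : V -> V -> V}
  (hm : comm_bilinear_mul mul) x u v : p1 mul x (u + v) = p1 mul x u + p1 mul x v.
Proof. by have [] := projD hm x u v. Qed.
Lemma p0D {F : fieldType} {V : lmodType F} {mul : V -> V -> V}
  (hm : comm_bilinear_mul mul) x u v : p0 mul x (u + v) = p0 mul x u + p0 mul x v.
Proof. by have [] := projD hm x u v. Qed.
Lemma phD {F : fieldType} {V : lmodType F} {mul : V -> V -> V}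
  (hm : comm_bilinear_mul mul) x u v : ph mul x (u + v) = ph mul x u + ph mul x v.
Proof. by have [] := projD hm x u v. Qed.

Lemma pv1 {F : fieldType} {V : lmodType F} {mul : V -> V -> V}
  (hF : [pchar F] =i pred0) (hm : comm_bilinear_mul mul) {x w} :
  eigsp mul x 1 w -> [/\ p1 mul x w = w, p0 mul x w = 0 & ph mul x w = 0].
Proof. by have [] := proj_vals hF hm (x := x) (w := w). Qed.
Lemma pv0 {F : fieldType} {V : lmodType F} {mul : V -> V -> V}
  (hF : [pchar F] =i pred0) (hm : comm_bilinear_mul mul) {x w} :
  eigsp mul x 0 w -> [/\ p1 mul x w = 0, p0 mul x w = w & ph mul x w = 0].
Proof. by have [] := proj_vals hF hm (x := x) (w := w). Qed.
Lemma pvh {F : fieldType} {V : lmodType F} {mul : V -> V -> V}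
  (hF : [pchar F] =i pred0) (hm : comm_bilinear_mul mul) {x w} :
  eigsp mul x 2^-1 w -> [/\ p1 mul x w = 0, p0 mul x w = 0 & ph mul x w = w].
Proof. by have [] := proj_vals hF hm (x := x) (w := w). Qed.

Lemma Jstruct {F : fieldType} {V : lmodType F} {mul : V -> V -> V} {form : V -> V -> F}
  (hF : [pchar F] =i pred0) (hm : comm_bilinear_mul mul) (hf : frobenius_form mul form)
  {a b} : primitive_axis_half mul a -> primitive_axis_half mul b -> form a b = 1 ->
  exists s h, [/\ b = comb3 a s h 1 1 1, eigsp mul a 0 s, eigsp mul a 2^-1 h &
     [/\ mul s s = 0, mul s h = 0 & mul h h = s]].
Proof.
move=> axa axb fab.
have h2 := two_neq0 hF.
have [an0 aa decA A1a [f11 f10 f00 [f1h f0h] fhh]] := ax_parts axa.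
have [bn0 bb decB A1b _] := ax_parts axb.
have [b1 [s [h [Eb g1 g0 gh]]]] := decA b.
have [k Ek] := A1a _ g1.
have faa : form a a = 1 by have [_ _ _ ->] := hf.
have k1 : k = 1.
  move: fab; rewrite Eb Ek !(formDr hf) (formZr hf) faa mulr1.
  rewrite (form_eig0 hF hf 0 aa _ g0) ?(eq_sym 0) ?oner_neq0 //.
  by rewrite (form_eig0 hF hf _ aa (half_neq1 hF) gh) !addr0.
move: Eb; rewrite Ek k1 scale1r -comb3_1 => Eb.
have ea1 : eigsp mul a 1 a by rewrite /eigsp aa scale1r.
have LC := Lcomb hm ea1 g0 gh.
have Tab : mul a b = a + 2^-1 *: h.
  by rewrite Eb LC /comb3 scale1r scale0r addr0 mul1r.
have ess : eigsp mul a 0 (mul s s) by apply: f00.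
have esh : eigsp mul a 2^-1 (mul s h) by apply: f0h.
have [w1 [w0 [Ehh e1 e0]]] := fhh h h gh gh.
have E : (a + 2^-1 *: h) + (mul s s + mul s h) + (2^-1 *: h + mul s h + (w1 + w0)) = b.
  rewrite -Tab.
  have -> : mul s s + mul s h = mul s b.
    by rewrite Eb comb3_1 !(mulDrx hm) (mulCx hm s a) g0 scale0r add0r.
  have -> : 2^-1 *: h + mul s h + (w1 + w0) = mul h b.
    by rewrite Eb comb3_1 !(mulDrx hm) (mulCx hm h a) gh (mulCx hm h s) Ehh.
  by rewrite -!(mulDlx hm) -comb3_1 -Eb.
have ehh : eigsp mul a 2^-1 (2^-1 *: h) by apply: (eigZ hm).
have [A1 A2 A3] := pv1 hF hm ea1.
have [B1 B2 B3] := pvh hF hm ehh.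
have [C1 C2 C3] := pv0 hF hm ess.
have [D1 D2 D3] := pvh hF hm esh.
have [G1 G2 G3] := pv1 hF hm e1.
have [H1 H2 H3] := pv0 hF hm e0.
have [K1 K2 K3] := pv0 hF hm g0.
have [L1 L2 L3] := pvh hF hm gh.
have Eph := congr1 (ph mul a) E.
have Ep0 := congr1 (p0 mul a) E.
have Ep1 := congr1 (p1 mul a) E.
rewrite Eb comb3_1 !(phD hm) A3 B3 C3 D3 G3 H3 K3 L3 in Eph.
rewrite Eb comb3_1 !(p0D hm) A2 B2 C2 D2 G2 H2 K2 L2 in Ep0.
rewrite Eb comb3_1 !(p1D hm) A1 B1 C1 D1 G1 H1 K1 L1 in Ep1.
rewrite !add0r !addr0 in Eph Ep0 Ep1.
have sh0 : mul s h = 0.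
  move: Eph; rewrite addrACA -scalerDl.
  have -> : (2^-1 + 2^-1 : F) = 1 by field.
  rewrite scale1r => e.
  have /addrI : h + (mul s h + mul s h) = h + 0 by rewrite addr0.
  move/eqP; rewrite -mulr2n -scaler_nat scaler_eq0 (negbTE h2) /=.
  by move/eqP.
have w10 : w1 = 0 by apply: (addrI a); rewrite addr0.
have Ehh' : mul h h = s - mul s s.
  by rewrite Ehh w10 add0r; apply: (addrI (mul s s)); rewrite Ep0 addrC subrK.
have [a1 [a0 [ah [Ea gb1 gb0 gbh]]]] := decB a.
have [psi Epsi] := A1b _ gb1.
have eb1 : eigsp mul b 1 b by rewrite /eigsp bb scale1r.
have LCb := Lcomb hm eb1 gb0 gbh.
move: Ea; rewrite Epsi => Ea.
have Ea' : a = comb3 b a0 ah psi 1 1 by rewrite /comb3 !scale1r.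
have Es : s = b + a - 2 *: mul a b.
  rewrite {2}Eb LC {1}Eb [X in _ = _ + X - _](_ : a = comb3 a s h 1 0 0).
    rewrite comb3D comb3Z comb3B [LHS](_ : s = comb3 a s h 0 1 0).
      by apply: comb3E; field.
    by rewrite /comb3 scale1r !scale0r add0r addr0.
  by rewrite /comb3 scale1r !scale0r !addr0.
have Es' : s = comb3 b a0 ah (1 - psi) 1 0.
  rewrite Es (mulCx hm a b) {2}Ea' LCb {1}Ea'.
  rewrite [X in X + _ - _ = _](_ : b = comb3 b a0 ah 1 0 0).
    by rewrite comb3D comb3Z comb3B; apply: comb3E; field.
  by rewrite /comb3 scale1r !scale0r !addr0.
have Ebs : mul b s = (1 - psi) *: b.
  by rewrite Es' LCb /comb3 scale0r mul0r scale0r !addr0.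
have Ebs' : mul b s = mul s s.
  by rewrite Eb comb3_1 !(mulDlx hm) g0 scale0r add0r (mulCx hm h s) sh0 addr0.
have ss0 : mul s s = 0.
  have := ess; rewrite /eigsp scale0r -Ebs' Ebs (mulZrx hm) => /eqP.
  rewrite scaler_eq0 => /orP [/eqP p1|/eqP ab0].
    by rewrite p1 scale0r.
  exfalso; move: an0; rewrite Tab in ab0.
  have [] := dec_uniq0 hF hm ea1 (eig0 hm 0) ehh; first by rewrite addr0.
  by move=> -> _ _; rewrite eqxx.
exists s, h; split => //; split => //.
by rewrite Ehh' ss0 subr0.
Qed.
Lemma Jmul {F : fieldType} {V : lmodType F} {mul : V -> V -> V}
  (hm : comm_bilinear_mul mul) {a s h} :
  mul a a = a -> eigsp mul a 0 s -> eigsp mul a 2^-1 h ->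
  mul s s = 0 -> mul s h = 0 -> mul h h = s ->
  forall x y z x' y' z',
  mul (comb3 a s h x y z) (comb3 a s h x' y' z') =
  comb3 a s h (x * x') (z * z') ((x * z' + z * x') * 2^-1).
Proof.
move=> aa g0 gh ss0 sh0 hh x y z x' y' z'.
have ea1 : eigsp mul a 1 a by rewrite /eigsp aa scale1r.
have LC := Lcomb hm ea1 g0 gh.
have Ms : mul s (comb3 a s h x' y' z') = 0.
  by rewrite /comb3 !(mulDrx hm) !(mulZrx hm) (mulCx hm s a) g0 scale0r ss0 sh0 !scaler0 !addr0.
have Mh : mul h (comb3 a s h x' y' z') = comb3 a s h 0 z' (x' * 2^-1).
  rewrite /comb3 !(mulDrx hm) !(mulZrx hm) (mulCx hm h a) gh (mulCx hm h s) sh0 hh.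
  by rewrite scaler0 addr0 scale0r add0r scalerA addrC.
rewrite {1}/comb3 !(mulDlx hm) !(mulZlx hm) LC Ms Mh scaler0 addr0 !comb3Z comb3D.
by apply: comb3E; ring.
Qed.

Lemma gen2_comb {F : fieldType} {V : lmodType F} {mul : V -> V -> V}
  (hm : comm_bilinear_mul mul) {a b s h} :
  mul a a = a -> eigsp mul a 0 s -> eigsp mul a 2^-1 h ->
  mul s s = 0 -> mul s h = 0 -> mul h h = s -> b = comb3 a s h 1 1 1 ->
  forall c, gen2 mul a b c -> exists x y z, c = comb3 a s h x y z.
Proof.
move=> aa g0 gh ss0 sh0 hh Eb c; elim.
- move=> x [->|->].
    by exists 1, 0, 0; rewrite /comb3 scale1r !scale0r !addr0.
  by exists 1, 1, 1.
- by exists 0, 0, 0; rewrite comb30.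
- move=> u v _ [x [y [z ->]]] _ [x' [y' [z' ->]]].
  by exists (x + x'), (y + y'), (z + z'); rewrite comb3D.
- move=> k u _ [x [y [z ->]]].
  by exists (k * x), (k * y), (k * z); rewrite comb3Z.
- move=> u v _ [x [y [z ->]]] _ [x' [y' [z' ->]]].
  by eexists _, _, _; rewrite (Jmul hm aa g0 gh ss0 sh0 hh).
Qed.

Lemma idem_cc {F : fieldType} {V : lmodType F} {mul : V -> V -> V}
  (hF : [pchar F] =i pred0) (hm : comm_bilinear_mul mul) {a s h} :
  a != 0 -> mul a a = a -> eigsp mul a 0 s -> eigsp mul a 2^-1 h ->
  mul s s = 0 -> mul s h = 0 -> mul h h = s ->
  forall x y z, let c := comb3 a s h x y z in mul c c = c -> c != 0 ->
  c = comb3 a s h 1 (z * z) z.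
Proof.
move=> an0 aa g0 gh ss0 sh0 hh x y z c.
have ea1 : eigsp mul a 1 a by rewrite /eigsp aa scale1r.
rewrite /c => e0 cn0; have e := e0; rewrite (Jmul hm aa g0 gh ss0 sh0 hh) in e.
have [E1 E2 E3] := dec_uniq hF hm (eigZ hm (x * x) ea1) (eigZ hm (z * z) g0)
   (eigZ hm ((x * z + z * x) * 2^-1) gh) (eigZ hm x ea1) (eigZ hm y g0) (eigZ hm z gh) e.
have xx : x * x = x.
  apply/eqP; rewrite -subr_eq0; apply/eqP; move/eqP: E1; rewrite -subr_eq0 -scalerBl.
  by rewrite scaler_eq0 (negbTE an0) orbF => /eqP.
have [x0|x1] : x = 0 \/ x = 1.
  have : x * (x - 1) == 0 by rewrite mulrBr mulr1 xx subrr.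
  rewrite mulf_eq0 subr_eq0.
  by case/orP => /eqP ->; [left|right].
- exfalso; have Ec : comb3 a s h x y z = y *: s.
    move: E3; rewrite /comb3 x0 !mul0r mulr0 addr0 mul0r !scale0r => <-.
    by rewrite add0r addr0.
  move: e0 cn0; rewrite Ec (mulZlx hm) (mulZrx hm) ss0 !scaler0 => <-.
  by rewrite eqxx.
- by rewrite /comb3 x1 -E2.
Qed.
Lemma tau_cc {F : fieldType} {V : lmodType F} {mul : V -> V -> V}
  (hF : [pchar F] =i pred0) (hm : comm_bilinear_mul mul) {a s h} :
  mul a a = a -> eigsp mul a 0 s -> eigsp mul a 2^-1 h ->
  mul s s = 0 -> mul s h = 0 -> mul h h = s ->
  forall t t', tau mul (comb3 a s h 1 (t * t) t) (comb3 a s h 1 (t' * t') t') =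
    comb3 a s h 1 ((2 * t - t') * (2 * t - t')) (2 * t - t').
Proof.
move=> aa g0 gh ss0 sh0 hh t t'.
have h2 := two_neq0 hF.
rewrite /tau !(Jmul hm aa g0 gh ss0 sh0 hh) comb3B comb3Z comb3D.
apply: comb3E; field; done.
Qed.

Lemma cc_nat {F : fieldType} {V : lmodType F} {mul : V -> V -> V}
  (hF : [pchar F] =i pred0) (hm : comm_bilinear_mul mul) {a b s h} :
  primitive_axis_half mul a -> primitive_axis_half mul b ->
  eigsp mul a 0 s -> eigsp mul a 2^-1 h ->
  mul s s = 0 -> mul s h = 0 -> mul h h = s -> b = comb3 a s h 1 1 1 ->
  forall n : nat, primitive_axis_half mul (comb3 a s h 1 (n%:R * n%:R) n%:R).
Proof.
move=> axa axb g0 gh ss0 sh0 hh Eb.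
have [_ aa _ _ _] := ax_parts axa.
suff H : forall n : nat, primitive_axis_half mul (comb3 a s h 1 (n%:R * n%:R) n%:R) /\
   primitive_axis_half mul (comb3 a s h 1 (n.+1%:R * n.+1%:R) n.+1%:R).
  by move=> n; case: (H n).
elim=> [|n [IH1 IH2]].
  split.
    by rewrite mul0r /comb3 scale1r !scale0r !addr0.
  by rewrite mulr1 -Eb.
split => //.
have [tK tM] := tau_auto hF hm IH2.
have := lemmaC hm _ (tauD hm _) (tauZ hm _) tM tK _ IH1.
rewrite (tau_cc hF hm aa g0 gh ss0 sh0 hh).
have -> : (2 * n.+1%:R - n%:R : F) = n.+2%:R.
  by rewrite -[n.+2]addn1 -[n.+1]addn1 !natrD; ring.
done.
Qed.
Definition polyf {F : fieldType} {W : lmodType F} (f : F -> W) :=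
  exists s : seq (nat * W), forall t, f t = \sum_(p <- s) t ^+ p.1 *: p.2.

Lemma polyf_const {F : fieldType} {W : lmodType F} (v : W) : polyf (fun _ : F => v).
Proof. by exists [:: (0%N, v)] => t; rewrite big_seq1 expr0 scale1r. Qed.

Lemma polyf_add {F : fieldType} {W : lmodType F} (f g : F -> W) :
  polyf f -> polyf g -> polyf (fun t => f t + g t).
Proof.
by move=> [s1 H1] [s2 H2]; exists (s1 ++ s2) => t; rewrite big_cat H1 H2.
Qed.

Lemma polyf_scale {F : fieldType} {W : lmodType F} (k : F) (f : F -> W) :
  polyf f -> polyf (fun t => k *: f t).
Proof.
move=> [s H]; exists [seq (p.1, k *: p.2) | p <- s] => t.
rewrite big_map H scaler_sumr; apply: eq_bigr => p _ /=.
by rewrite !scalerA mulrC.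
Qed.

Lemma polyf_opp {F : fieldType} {W : lmodType F} (f : F -> W) :
  polyf f -> polyf (fun t => - f t).
Proof.
move=> /(polyf_scale (-1)) [s H]; exists s => t; by rewrite -H scaleN1r.
Qed.

Lemma polyf_sub {F : fieldType} {W : lmodType F} (f g : F -> W) :
  polyf f -> polyf g -> polyf (fun t => f t - g t).
Proof. by move=> pf pg; apply: polyf_add => //; apply: polyf_opp. Qed.

Lemma polyf_t {F : fieldType} {W : lmodType F} (f : F -> W) :
  polyf f -> polyf (fun t => t *: f t).
Proof.
move=> [s H]; exists [seq (p.1.+1, p.2) | p <- s] => t.
rewrite big_map H scaler_sumr; apply: eq_bigr => p _ /=.
by rewrite scalerA exprS.
Qed.

Lemma bil_sum_l {F : fieldType} {W : lmodType F} (be : W -> W -> W) :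
  (forall k u v w, be (k *: u + v) w = k *: be u w + be v w) ->
  forall (I : Type) (s : seq I) (G : I -> W) w,
    be (\sum_(i <- s) G i) w = \sum_(i <- s) be (G i) w.
Proof.
move=> bl I s G w.
have b0 : be 0 w = 0.
  have := bl 1 0 0 w; rewrite !scale1r addr0 => e.
  by apply: (addrI (be 0 w)); rewrite -e addr0.
elim: s => [|x s IH]; first by rewrite !big_nil.
by rewrite !big_cons -[G x]scale1r bl !scale1r IH.
Qed.

Lemma polyf_bil {F : fieldType} {W : lmodType F} (be : W -> W -> W) (f g : F -> W) :
  (forall k u v w, be (k *: u + v) w = k *: be u w + be v w) ->
  (forall k u v w, be w (k *: u + v) = k *: be w u + be w v) ->
  polyf f -> polyf g -> polyf (fun t => be (f t) (g t)).
Proof.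
move=> bl br [s1 H1] [s2 H2].
have blZ : forall k u w, be (k *: u) w = k *: be u w.
  move=> k u w; have b0 : be 0 w = 0.
    have := bl 1 0 0 w; rewrite !scale1r addr0 => e.
    by apply: (addrI (be 0 w)); rewrite -e addr0.
  by rewrite -[k *: u]addr0 bl b0 addr0.
have brZ : forall k u w, be w (k *: u) = k *: be w u.
  move=> k u w; have b0 : be w 0 = 0.
    have := br 1 0 0 w; rewrite !scale1r addr0 => e.
    by apply: (addrI (be w 0)); rewrite -e addr0.
  by rewrite -[k *: u]addr0 br b0 addr0.
have br' : forall k u v w, be (k *: u + v) w = k *: be u w + be v w := bl.
exists [seq ((p.1 + q.1)%N, be p.2 q.2) | p <- s1, q <- s2] => t.
rewrite big_allpairs_dep H1 H2 (bil_sum_l _ bl); apply: eq_bigr => p _.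
rewrite blZ.
have bs := bil_sum_l (fun x y => be y x) (fun k u v w => br k u v w).
rewrite (bs _ s2 (fun q => t ^+ q.1 *: q.2) p.2) scaler_sumr.
by apply: eq_bigr => q _ /=; rewrite brZ scalerA exprD.
Qed.
Lemma regroup {F : fieldType} {W : lmodType F} (s : seq (nat * W)) (D : nat) (t : F) :
  (forall p, p \in s -> (p.1 < D)%N) ->
  \sum_(p <- s) t ^+ p.1 *: p.2 =
  \sum_(i < D) t ^+ i *: \sum_(p <- s | p.1 == i) p.2.
Proof.
elim: s => [|x s IH] hs.
  by rewrite big_nil big1 // => i _; rewrite big_nil scaler0.
rewrite big_cons IH; last by move=> p ps; apply: hs; rewrite inE ps orbT.
have hx : (x.1 < D)%N by apply: hs; rewrite inE eqxx.
symmetry.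
rewrite (eq_bigr (fun i : 'I_D => (if x.1 == i then t ^+ i *: x.2 else 0) +
   t ^+ i *: \sum_(p <- s | p.1 == i) p.2)); last first.
  by move=> i _; rewrite big_cons; case: eqP => _; rewrite ?scalerDr ?add0r.
rewrite big_split /=; congr (_ + _).
by rewrite -big_mkcond /= (big_pred1 (Ordinal hx)) //=.
Qed.

Lemma vandermonde_zero {F : fieldType} {W : lmodType F} (hF : [pchar F] =i pred0)
  (D : nat) (w : nat -> W) :
  (forall n : nat, \sum_(i < D) (n%:R : F) ^+ i *: w i = 0) ->
  forall i, (i < D)%N -> w i = 0.
Proof.
move=> H i iD.
pose M := Vandermonde D (\row_(j < D) (j : nat)%:R : 'rV[F]_D).
have Mu : M \in unitmx.
  rewrite unitmxE unitfE det_Vandermonde.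
  rewrite prodf_seq_neq0; apply/allP => k _; apply/implyP => _.
  rewrite prodf_seq_neq0; apply/allP => j _; apply/implyP => kj.
  rewrite !mxE -natrB ?(ltnW kj) //.
  by move/pcharf0P: hF => ->; rewrite subn_eq0 -ltnNge.
pose N := invmx M.
have MN : M *m N = 1%:M by rewrite mulmxV.
pose k := Ordinal iD.
have -> : w i = \sum_(l < D) (1%:M : 'M[F]_D) l k *: w l.
  rewrite (bigD1 k) //= mxE eqxx scale1r big1 ?addr0 // => l lk.
  by rewrite mxE (negbTE lk) scale0r.
rewrite -MN.
under eq_bigr => l _ do rewrite mxE scaler_suml.
rewrite exchange_big big1 // => j _.
under eq_bigr => l _ do rewrite mulrC -scalerA.
rewrite -scaler_sumr.
have -> : \sum_(l < D) M l j *: w l = 0.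
  rewrite -[RHS](H j); apply: eq_bigr => l _.
  by rewrite /M /Vandermonde !mxE.
by rewrite scaler0.
Qed.

Lemma polyf_zero {F : fieldType} {W : lmodType F} (hF : [pchar F] =i pred0) (f : F -> W) :
  polyf f -> (forall n : nat, f n%:R = 0) -> forall t, f t = 0.
Proof.
move=> [s H] Hn t.
pose D := (\max_(p <- s) p.1).+1.
have hs : forall p, p \in s -> (p.1 < D)%N.
  by move=> p ps; rewrite ltnS; apply: leq_bigmax_seq.
pose w i := \sum_(p <- s | p.1 == i) p.2.
have wz : forall i, (i < D)%N -> w i = 0.
  apply: (vandermonde_zero hF) => n.
  by rewrite -(regroup _ _ _ hs) -H Hn.
rewrite H (regroup _ _ _ hs) big1 // => i _.
by rewrite -/(w i) wz // scaler0.
Qed.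
Theorem proposition6p5 (F : fieldType) (V : lmodType F) (mul : V -> V -> V)
    (form : V -> V -> F) (a b : V) :
  [pchar F] =i pred0 ->
  jordan_type_half_algebra mul ->
  frobenius_form mul form ->
  primitive_axis_half mul a -> primitive_axis_half mul b ->
  form a b = 1 ->
  forall c, gen2 mul a b c -> mul c c = c -> c != 0 -> primitive_axis_half mul c.
Proof.
move=> hF [hm _] hf axa axb fab c gc cc cn0.
have [s [h [Eb g0 gh [ss0 sh0 hh]]]] := Jstruct hF hm hf axa axb fab.
have [an0 aa _ _ _] := ax_parts axa.
have [x [y [z Ec]]] := gen2_comb hm aa g0 gh ss0 sh0 hh Eb c gc.
have Ec' : c = comb3 a s h 1 (z * z) z.
  have := idem_cc hF hm an0 aa g0 gh ss0 sh0 hh x y z; rewrite /= -Ec.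
  by apply.
have blm : forall k u v w, mul (k *: u + v) w = k *: mul u w + mul v w by case: hm.
have brm : forall k u v w, mul w (k *: u + v) = k *: mul w u + mul w v by case: hm.
have blf : forall u k (y0 z0 w : V), form (k *: y0 + z0) u *: w = k *: (form y0 u *: w) + form z0 u *: w.
  by move=> u k y0 z0 w; rewrite (formDl hf) (formZl hf) scalerDl scalerA.
have brf : forall u k (y0 z0 w : V), form w u *: (k *: y0 + z0) = k *: (form w u *: y0) + form w u *: z0.
  by move=> u k y0 z0 w; rewrite scalerDr !scalerA mulrC.
have PX : polyf (fun t => comb3 a s h 1 (t * t) t).
  exists [:: (0%N, a); (2%N, s); (1%N, h)] => t.
  by rewrite !big_cons big_nil addr0 /= expr0 expr1 expr2 /comb3 addrA.
have AX := cc_nat hF hm axa axb g0 gh ss0 sh0 hh Eb.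
pose X t := comb3 a s h 1 (t * t) t.
have I1z : forall u, I1 mul (X z) u = 0.
  move=> u; apply: (polyf_zero hF (fun t => I1 mul (X t) u)); last first.
    by move=> n; have [-> _ _ _ _] := lemmaA hF hm hf (AX n).
  rewrite /I1 /X.
  by repeat first [exact: PX | apply: polyf_const | apply: polyf_add | apply: polyf_opp
    | apply: polyf_scale | apply: (polyf_bil mul _ _ blm brm)].
have I2z : forall u, I2 mul form (X z) u = 0.
  move=> u; apply: (polyf_zero hF (fun t => I2 mul form (X t) u)); last first.
    by move=> n; have [_ -> _ _ _] := lemmaA hF hm hf (AX n).
  rewrite /I2 /p1 /X.
  apply: polyf_add; last first.
    apply: polyf_opp; apply: (polyf_bil (fun y0 w => form y0 u *: w) _ _ (blf u) (brf u)) => //.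
  by repeat first [exact: PX | apply: polyf_const | apply: polyf_add | apply: polyf_opp
    | apply: polyf_scale | apply: (polyf_bil mul _ _ blm brm)].
have I3z : forall u v, I3 mul (X z) u v = 0.
  move=> u v; apply: (polyf_zero hF (fun t => I3 mul (X t) u v)); last first.
    by move=> n; have [_ _ -> _ _] := lemmaA hF hm hf (AX n).
  rewrite /I3 /p0 /X.
  by repeat first [exact: PX | apply: polyf_const | apply: polyf_add | apply: polyf_opp
    | apply: polyf_scale | apply: (polyf_bil mul _ _ blm brm)].
have I4z : forall u v, I4 mul (X z) u v = 0.
  move=> u v; apply: (polyf_zero hF (fun t => I4 mul (X t) u v)); last first.
    by move=> n; have [_ _ _ -> _] := lemmaA hF hm hf (AX n).
  rewrite /I4 /p0 /ph /X.
  by repeat first [exact: PX | apply: polyf_const | apply: polyf_add | apply: polyf_opp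
    | apply: polyf_scale | apply: (polyf_bil mul _ _ blm brm)].
have I5z : forall u v, I5 mul (X z) u v = 0.
  move=> u v; apply: (polyf_zero hF (fun t => I5 mul (X t) u v)); last first.
    by move=> n; have [_ _ _ _ ->] := lemmaA hF hm hf (AX n).
  rewrite /I5 /ph /X.
  by repeat first [exact: PX | apply: polyf_const | apply: polyf_add | apply: polyf_opp
    | apply: polyf_scale | apply: (polyf_bil mul _ _ blm brm)].
rewrite Ec'.
apply: (lemmaB (form := form) hF hm) => //; rewrite -Ec' //.
Qed.
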